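(* Fix $T>0$ and a continuous $h>0$ on $[0,T]$, and assume that for every boundary function $s$ on $[0,T]$ the Fixed Boundary Neumann Problem with flux $h$ has a solution $U^s$. Let $\mathcal{R}$ be the Neumann boundary-update operator and $\mathcal{P}^{1/2}(s)=\tfrac12\mathcal{R}(s)+\tfrac12 s$. Let $s^*$ be a boundary function with $\mathcal{R}(s^* )=s^*$ (i.e. $s^*$ is the free boundary of the solution of the Stefan problem with this Neumann condition). If $s$ is a boundary function with $s(t)\le s^*(t)$ for all $t\in[0,T]$, then for all $t\in[0,T]$ $$s-s^*\le \frac{s-s^*}{2}\le \mathcal{P}^{1/2}(s)-s^*\le \frac{\mathcal{R}(s)-s^*}{2}\le \mathcal{R}(s)-s^*.$$ If instead $s(t)\ge s^*(t)$ for all $t\in[0,T]$, then for all $t\in[0,T]$ $$s-s^*\ge \frac{s-s^*}{2}\ge \mathcal{P}^{1/2}(s)-s^*\ge \frac{\mathcal{R}(s)-s^*}{2}\ge \mathcal{R}(s)-s^*.$$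
   Context: A boundary function on $[0,T]$ is a function $s\in C([0,T])\cap C^1((0,T])$ with $s(0)=0$ and $s(t)>0$ for $t\in(0,T]$. For such $s$ let $Q_{s,T}=\{(x,t):0<x<s(t),\,0<t<T\}$. The Fixed Boundary Neumann Problem on $s$ with flux $h$ asks for $U\in C(\overline{Q_{s,T}})\cap C^{2,1}(Q_{s,T})$ with $U_x$ continuous on $\overline{Q_{s,T}}\setminus\{t=0\}$ such that $U_t=U_{xx}$ in $Q_{s,T}$, $U(0,0)=0$, $U(s(t),t)=0$, and $-U_x(0,t)=h(t)$; its solution is $U^s$. The Neumann boundary-update operator is $\mathcal{R}(s)(t)=\int_0^t h(z)\,dz-\int_0^{s(t)}U^s(x,t)\,dx$ for $0\le t\le T$. *)

(* Defs.v *)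
From Stdlib Require Import Reals.
From Coquelicot Require Import Coquelicot.
Open Scope R_scope.

(* derivative of f at x relative to the set D (one-sided at endpoints) *)
Definition is_derive_within (D : R -> Prop) (f : R -> R) (x l : R) : Prop :=
  filterlim (fun y => (f y - f x) / (y - x))
            (within (fun y => D y /\ y <> x) (locally x)) (locally l).

Definition boundary_function (T : R) (s : R -> R) : Prop :=
  continuous_on (fun t => 0 <= t <= T) s /\
  (exists ds : R -> R,
     (forall t, 0 < t <= T -> is_derive_within (fun y => 0 < y <= T) s t (ds t)) /\
     continuous_on (fun t => 0 < t <= T) ds) /\
  s 0 = 0 /\
  (forall t, 0 < t <= T -> 0 < s t).

Definition Qst (s : R -> R) (T : R) (p : R * R) : Prop :=
  0 < fst p < s (snd p) /\ 0 < snd p < T.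

Definition Qst_closure (s : R -> R) (T : R) (p : R * R) : Prop :=
  0 <= fst p <= s (snd p) /\ 0 <= snd p <= T.

Definition uncurry (U : R -> R -> R) : R * R -> R := fun p => U (fst p) (snd p).

Definition FBNP_solution (T : R) (h : R -> R) (s : R -> R) (U : R -> R -> R) : Prop :=
  continuous_on (Qst_closure s T) (uncurry U) /\
  exists Ux Uxx Ut : R -> R -> R,
    (forall x t, Qst s T (x, t) ->
       is_derive (fun y => U y t) x (Ux x t) /\
       is_derive (fun y => Ux y t) x (Uxx x t) /\
       is_derive (fun z => U x z) t (Ut x t)) /\
    (forall p, Qst s T p ->
       continuous (uncurry Uxx) p /\ continuous (uncurry Ut) p) /\
    continuous_on (fun p => Qst_closure s T p /\ snd p <> 0) (uncurry Ux) /\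
    (forall x t, Qst s T (x, t) -> Ut x t = Uxx x t) /\
    U 0 0 = 0 /\
    (forall t, 0 < t <= T -> U (s t) t = 0) /\
    (forall t, 0 < t <= T -> - Ux 0 t = h t).

(* Neumann boundary-update operator, given the solution map Usol : s |-> U^s *)
Definition Rop (h : R -> R) (Usol : (R -> R) -> R -> R -> R) (s : R -> R) (t : R) : R :=
  RInt h 0 t - RInt (fun x => Usol s x t) 0 (s t).

Definition Phalf (h : R -> R) (Usol : (R -> R) -> R -> R -> R) (s : R -> R) (t : R) : R :=
  / 2 * Rop h Usol s t + / 2 * s t.

(* Main.v *)
Require Import Defs.
From Stdlib Require Import Reals Lra Psatz ClassicalEpsilon FunctionalExtensionality.
From Coquelicot Require Import Coquelicot.
Open Scope R_scope.

Lemma comp_within {X Y : UniformSpace} (D : Y -> Prop) (G : Y -> R) (c : X -> Y) (y : X) :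
  continuous_on D G -> (forall z, D (c z)) -> continuous c y ->
  continuous (fun z => G (c z)) y.
Proof.
  intros HG HD Hc. unfold continuous.
  eapply filterlim_comp. 2: apply (HG (c y) (HD y)).
  intros P HP. unfold within in HP. apply Hc in HP.
  unfold filtermap in *. eapply filter_imp. 2: exact HP.
  intros z Hz. apply Hz, HD.
Qed.

Definition clamp (a b x : R) := Rmax a (Rmin b x).

Lemma clamp_lip a b x y : a <= b -> Rabs (clamp a b x - clamp a b y) <= Rabs (x - y).
Proof.
  intros. unfold clamp, Rmax, Rmin.
  repeat destruct Rle_dec; unfold Rabs; repeat destruct Rcase_abs; lra.
Qed.

Lemma clamp_in a b x : a <= b -> a <= clamp a b x <= b.
Proof. intros; unfold clamp, Rmax, Rmin; repeat destruct Rle_dec; lra. Qed.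

Lemma clamp_id a b x : a <= x <= b -> clamp a b x = x.
Proof. intros; unfold clamp, Rmax, Rmin; repeat destruct Rle_dec; lra. Qed.

Lemma clamp_cont a b x : a <= b -> continuous (clamp a b) x.
Proof.
  intros Hab. apply continuity_pt_filterlim. apply continuity_pt_locally.
  intros eps. exists eps. intros u Hu.
  eapply Rle_lt_trans. apply clamp_lip; auto.
  exact Hu.
Qed.

Lemma cont_pair {U : UniformSpace} (f g : U -> R) x :
  continuous f x -> continuous g x -> continuous (fun z => (f z, g z)) x.
Proof.
  intros Hf Hg.
  apply (continuous_comp_2 f g (fun a b => (a, b))); auto.
  apply continuous_ext with (f := fun y : R * R => y).
  - intros [a b]; reflexivity.
  - apply continuous_id.
Qed.

Lemma slice_cont (f : R -> R -> R) t y :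
  continuity_2d_pt f t y -> continuity_pt (f t) y.
Proof.
  intros H. apply continuity_pt_filterlim.
  apply continuity_2d_pt_filterlim in H.
  change (continuous (fun y0 => (fun z : R * R => f (fst z) (snd z)) ((fun y1 => (t, y1)) y0)) y).
  apply continuous_comp.
  - apply (continuous_comp_2 (fun _ => t) (fun y1 => y1) (fun a b => (a,b))).
    apply continuous_const. apply continuous_id.
    apply continuous_ext with (f := fun y : R * R => y).
    + intros [a b]; reflexivity.
    + apply continuous_id.
  - exact H.
Qed.

Lemma evt_rect (f : R -> R -> R) (a b c d : R) : a <= b -> c <= d ->
  (forall t y, continuity_2d_pt f t y) ->
  exists t0 y0, a <= t0 <= b /\ c <= y0 <= d /\
    forall t y, a <= t <= b -> c <= y <= d -> f t0 y0 <= f t y.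
Proof.
  intros Hab Hcd Hf.
  assert (H : forall t, exists mx, (forall c', c <= c' <= d -> f t mx <= f t c') /\ c <= mx <= d).
  { intros t. apply continuity_ab_min; auto. intros; apply slice_cont, Hf. }
  set (ym := fun t => proj1_sig (constructive_indefinite_description _ (H t))).
  assert (Hym : forall t, (forall c', c <= c' <= d -> f t (ym t) <= f t c') /\ c <= ym t <= d).
  { intros t. unfold ym. destruct constructive_indefinite_description; simpl; auto. }
  set (g := fun t => f t (ym t)).
  assert (Hg : forall t, continuity_pt g t).
  { intros t. apply continuity_pt_locally. intros eps.
    destruct (uniform_continuity_2d_1d' f c d t (fun x _ => Hf t x) (pos_div_2 eps)) as [del Hdel].
    exists del. intros u Hu.
    change (Rabs (u - t) < del) in Hu.
    assert (Hb : forall x, c <= x <= d -> Rabs (f u x - f t x) < eps / 2).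
    { intros x Hx. apply (Hdel x t x u); auto.
      - split; destruct del; simpl in *; lra.
      - apply Rabs_def2 in Hu; lra.
      - rewrite Rminus_diag, Rabs_R0. apply cond_pos. }
    destruct (Hym u) as [Hu1 Hu2]. destruct (Hym t) as [Ht1 Ht2].
    pose proof (Hb _ Hu2). pose proof (Hb _ Ht2).
    pose proof (Hu1 _ Ht2). pose proof (Ht1 _ Hu2).
    unfold g. apply Rabs_def2 in H0. apply Rabs_def2 in H1.
    apply Rabs_def1; destruct eps; simpl in *; lra. }
  destruct (continuity_ab_min g a b Hab (fun c0 _ => Hg c0)) as [t0 [Ht0 Ht0']].
  exists t0, (ym t0). split; auto. split. apply Hym.
  intros t y Ht Hy. apply Rle_trans with (g t). apply Ht0; auto.
  unfold g. apply Hym; auto.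
Qed.

Definition Kset (s : R -> R) (tau : R) (p : R * R) : Prop :=
  0 <= fst p <= s (snd p) /\ 0 <= snd p <= tau.

Lemma evt_K (s : R -> R) tau (V : R -> R -> R) : 0 < tau ->
  continuous_on (fun t => 0 <= t <= tau) s ->
  (forall t, 0 <= t <= tau -> 0 <= s t) ->
  continuous_on (Kset s tau) (uncurry V) ->
  exists x0 t0, Kset s tau (x0, t0) /\ forall x t, Kset s tau (x, t) -> V x0 t0 <= V x t.
Proof.
  intros Htau Hs Hs0 HV.
  set (c := fun z : R * R => (clamp 0 1 (snd z) * s (clamp 0 tau (fst z)), clamp 0 tau (fst z))).
  assert (HcK : forall z, Kset s tau (c z)).
  { intros z. unfold c, Kset; simpl.
    pose proof (clamp_in 0 1 (snd z) Rle_0_1).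
    pose proof (clamp_in 0 tau (fst z) (Rlt_le _ _ Htau)).
    pose proof (Hs0 _ H0). split; [|auto]. split; nra. }
  set (F := fun t y => uncurry V (c (t, y))).
  assert (HF : forall t y, continuity_2d_pt F t y).
  { intros t y. apply continuity_2d_pt_filterlim.
    change (continuous (fun z : R * R => uncurry V (c (fst z, snd z))) (t, y)).
    apply continuous_ext with (f := fun z => uncurry V (c z)).
    { intros [a b]; reflexivity. }
    apply comp_within with (D := Kset s tau); auto.
    unfold c. apply cont_pair.
    - apply (continuous_mult (fun z : R * R => clamp 0 1 (snd z)) (fun z : R * R => s (clamp 0 tau (fst z)))).
      + apply (continuous_comp (fun z : R * R => snd z) (clamp 0 1)).
        apply continuous_snd. apply clamp_cont; lra.
      + apply comp_within with (D := fun t => 0 <= t <= tau); auto.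
        * intros; apply clamp_in; lra.
        * apply (continuous_comp (fun z : R * R => fst z) (clamp 0 tau)).
          apply continuous_fst. apply clamp_cont; lra.
    - apply (continuous_comp (fun z : R * R => fst z) (clamp 0 tau)).
      apply continuous_fst. apply clamp_cont; lra. }
  destruct (evt_rect F 0 tau 0 1 (Rlt_le _ _ Htau) Rle_0_1 HF) as [t0 [y0 [Ht0 [Hy0 Hmin]]]].
  exists (fst (c (t0, y0))), (snd (c (t0, y0))). split.
  { pose proof (HcK (t0, y0)) as HK. destruct (c (t0, y0)); exact HK. }
  intros x t [Hx Ht].
  simpl in Hx, Ht.
  assert (Hmin' := Hmin).
  assert (E : exists y, 0 <= y <= 1 /\ F t y = V x t).
  { destruct (Rle_lt_or_eq_dec 0 (s t) (Hs0 t Ht)) as [Hp|Hz].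
    - exists (x / s t). split.
      + split. apply Rmult_le_pos; [lra| apply Rlt_le, Rinv_0_lt_compat; lra].
        apply Rmult_le_reg_r with (s t); auto. unfold Rdiv.
        rewrite Rmult_assoc, Rinv_l; lra.
      + unfold F, c, uncurry; simpl. rewrite !clamp_id; try lra.
        f_equal. field. lra.
        split. apply Rmult_le_pos; [lra| apply Rlt_le, Rinv_0_lt_compat; lra].
        apply Rmult_le_reg_r with (s t); auto. unfold Rdiv.
        rewrite Rmult_assoc, Rinv_l; lra.
    - exists 0. split. lra. unfold F, c, uncurry; simpl.
      rewrite !clamp_id; try lra. f_equal. rewrite <- Hz in Hx. lra. }
  destruct E as [y [Hy Ey]]. rewrite <- Ey.
  change (F t0 y0 <= F t y). apply Hmin; auto.
Qed.

Lemma cont_on_eps1 (D : R -> Prop) (f : R -> R) x :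
  continuous_on D f -> D x -> forall e, 0 < e ->
  exists d, 0 < d /\ forall y, D y -> Rabs (y - x) < d -> Rabs (f y - f x) < e.
Proof.
  intros Hf Dx e He.
  pose proof (proj1 (filterlim_locally _ _) (Hf x Dx) (mkposreal e He)) as H.
  destruct H as [d Hd]. exists d. split. apply cond_pos.
  intros y Dy Hy. apply (Hd y). exact Hy. exact Dy.
Qed.

Lemma cont_on_eps2 (D : R * R -> Prop) (f : R * R -> R) x :
  continuous_on D f -> D x -> forall e, 0 < e ->
  exists d, 0 < d /\ forall p, D p -> Rabs (fst p - fst x) < d -> Rabs (snd p - snd x) < d ->
     Rabs (f p - f x) < e.
Proof.
  intros Hf Dx e He.
  pose proof (proj1 (filterlim_locally _ _) (Hf x Dx) (mkposreal e He)) as H.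
  destruct H as [d Hd]. exists d. split. apply cond_pos.
  intros p Dp H1 H2. apply (Hd p). split; assumption. exact Dp.
Qed.

Lemma is_derive_plusR (f g : R -> R) x a b :
  is_derive f x a -> is_derive g x b -> is_derive (fun y => f y + g y) x (a + b).
Proof. intros; apply (is_derive_plus f g); auto. Qed.

Lemma sign_pos (f : R -> R) x l : is_derive f x l -> 0 < l ->
  exists d, 0 < d /\ forall h, 0 < h < d -> f (x - h) < f x /\ f x < f (x + h).
Proof.
  intros Hd Hl. apply is_derive_Reals in Hd.
  destruct (Hd (l / 2) ltac:(lra)) as [del Hdel].
  exists del. split. apply cond_pos. intros h Hh.
  split.
  - assert (H := Hdel (- h) ltac:(lra) ltac:(rewrite Rabs_Ropp, Rabs_pos_eq; lra)).
    apply Rabs_def2 in H.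
    replace (x + - h) with (x - h) in H by ring.
    assert (E : f (x - h) - f x = ((f (x - h) - f x) / - h) * (- h)) by (field; lra).
    nra.
  - assert (H := Hdel h ltac:(lra) ltac:(rewrite Rabs_pos_eq; lra)).
    apply Rabs_def2 in H.
    assert (E : f (x + h) - f x = ((f (x + h) - f x) / h) * h) by (field; lra).
    nra.
Qed.

Lemma cont_on_plus (D : R * R -> Prop) (f g : R * R -> R) :
  continuous_on D f -> (forall p, continuous g p) -> continuous_on D (fun p => f p + g p).
Proof.
  intros Hf Hg x Dx.
  apply (filterlim_comp_2 (G := locally (f x)) (H := locally (g x)) f g Rplus).
  - apply Hf; auto.
  - intros P HP. apply (Hg x) in HP. unfold within, filtermap in *.
    eapply filter_imp. 2: exact HP. auto.
  - apply (filterlim_plus (f x) (g x)).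
Qed.

Lemma min_principle (s : R -> R) tau (W Wx Wxx Wt : R -> R -> R) :
  0 < tau ->
  continuous_on (fun t => 0 <= t <= tau) s -> s 0 = 0 ->
  (forall t, 0 < t <= tau -> 0 < s t) ->
  continuous_on (Kset s tau) (uncurry W) ->
  (forall x t, 0 < t <= tau -> 0 < x < s t ->
     is_derive (fun y => W y t) x (Wx x t) /\ is_derive (fun y => Wx y t) x (Wxx x t) /\
     is_derive (fun z => W x z) t (Wt x t) /\ Wt x t = Wxx x t) ->
  (forall t, 0 < t <= tau -> forall e, 0 < e ->
     exists d, 0 < d /\ forall x, 0 <= x < d -> x < s t -> Wx x t < e) ->
  0 <= W 0 0 -> (forall t, 0 < t <= tau -> 0 <= W (s t) t) ->
  forall x t, Kset s tau (x, t) -> 0 <= W x t.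
Proof.
  intros Htau Hsc Hs0 Hsp HWc HD HL HB0 HBr x t HK.
  destruct (Rle_or_lt 0 (W x t)) as [|Hneg]; auto. exfalso.
  set (eps := - W x t / (2 * (3 * tau + 1))).
  assert (Heps : 0 < eps).
  { unfold eps. apply Rdiv_lt_0_compat; timeout 10 lra. }
  set (V := fun x t => W x t + eps * (3 * t + exp (- x))).
  assert (HVc : continuous_on (Kset s tau) (uncurry V)).
  { apply continuous_on_ext with (f := fun p => uncurry W p + eps * (3 * snd p + exp (- fst p))).
    { intros [a b] _; reflexivity. }
    apply cont_on_plus; auto. intros [a b].
    apply (continuous_mult (fun _ => eps) (fun p : R * R => 3 * snd p + exp (- fst p))).
    apply continuous_const.
    apply (continuous_plus (fun p : R * R => 3 * snd p) (fun p : R * R => exp (- fst p))).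
    apply (continuous_mult (fun _ => 3) (fun p : R * R => snd p)). apply continuous_const. apply continuous_snd.
    apply (continuous_comp (fun p : R * R => - fst p) exp).
    apply (continuous_comp (fun p : R * R => fst p) (fun u => - u)). apply continuous_fst.
    apply continuous_ext with (f := fun u : R => opp u). intros; reflexivity.
    apply (continuous_opp (fun u : R => u)), continuous_id.
    apply (continuous_exp_comp (fun u => u)), continuous_id. }
  assert (Hsnn : forall t, 0 <= t <= tau -> 0 <= s t).
  { intros z Hz. destruct (Rle_lt_or_eq_dec 0 z (proj1 Hz)) as [Hp|Hz0].
    apply Rlt_le, Hsp; timeout 10 lra. subst z; timeout 10 lra. }
  destruct (evt_K s tau V Htau Hsc Hsnn HVc) as [x0 [t0 [HK0 Hmin]]].
  destruct HK as [Hx Ht]; simpl in Hx, Ht.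
  assert (Hexp1 : forall y, 0 <= y -> exp (- y) <= 1).
  { intros y Hy. rewrite <- exp_0. destruct (Rle_lt_or_eq_dec 0 y Hy).
    apply Rlt_le, exp_increasing; timeout 10 lra. subst; rewrite Ropp_0; timeout 10 lra. }
  assert (HVneg : V x0 t0 < 0).
  { apply Rle_lt_trans with (V x t). apply Hmin. split; simpl; timeout 10 lra.
    unfold V. pose proof (Hexp1 x (proj1 Hx)).
    assert (eps * (3 * t + exp (- x)) <= eps * (3 * tau + 1)) by (apply Rmult_le_compat_l; lra).
    assert (eps * (3 * tau + 1) = - W x t / 2) by (unfold eps; field; lra). timeout 10 lra. }
  assert (Hphi : forall x t, 0 <= t -> 0 < eps * (3 * t + exp (- x))).
  { intros a b Hb. apply Rmult_lt_0_compat; auto. pose proof (exp_pos (- a)); timeout 10 lra. }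
  destruct HK0 as [Hx0 Ht0]; simpl in Hx0, Ht0.
  destruct (Rle_lt_or_eq_dec 0 t0 (proj1 Ht0)) as [Ht0p|Ht00].
  2:{ subst t0. rewrite Hs0 in Hx0. assert (x0 = 0) by timeout 10 lra. subst x0.
      unfold V in HVneg. pose proof (Hphi 0 0 (Rle_refl 0)). timeout 10 lra. }
  assert (Ht0' : 0 < t0 <= tau) by timeout 10 lra.
  destruct (Rle_lt_or_eq_dec x0 (s t0) (proj2 Hx0)) as [Hx0r|Hx0r].
  2:{ subst x0. unfold V in HVneg. pose proof (HBr t0 Ht0'). pose proof (Hphi (s t0) t0 (proj1 Ht0)). timeout 10 lra. }
  assert (Hst0 := Hsp t0 Ht0').
  assert (HVx : forall y, 0 < y < s t0 ->
     is_derive (fun z => V z t0) y (Wx y t0 - eps * exp (- y))).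
  { intros y Hy. destruct (HD y t0 Ht0' Hy) as [H1 _].
    unfold V. replace (Wx y t0 - eps * exp (- y)) with (Wx y t0 + - (eps * exp (- y))) by ring.
    apply is_derive_plusR; auto. auto_derive; auto. ring. }
  destruct (Rle_lt_or_eq_dec 0 x0 (proj1 Hx0)) as [Hx0l|Hx0l].
  -
    destruct (HD x0 t0 Ht0' (conj Hx0l Hx0r)) as [HWx [HWxx [HWt Heq]]].
    assert (HVt : Wt x0 t0 + 3 * eps <= 0).
    { destruct (Rle_or_lt (Wt x0 t0 + 3 * eps) 0) as [|Hc]; auto. exfalso.
      assert (Hd : is_derive (fun z => V x0 z) t0 (Wt x0 t0 + 3 * eps)).
      { unfold V. apply is_derive_plusR; auto. auto_derive; auto. ring. }
      destruct (sign_pos _ _ _ Hd Hc) as [d1 [Hd1 Hs1]].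
      destruct (cont_on_eps1 _ s t0 Hsc (conj (proj1 Ht0) (proj2 Ht0)) (s t0 - x0) ltac:(lra)) as [d2 [Hd2 Hs2]].
      set (h := Rmin d1 (Rmin d2 t0) / 2).
      assert (Hh : 0 < h /\ h < d1 /\ h < d2 /\ h < t0).
      { unfold h. repeat split;
        try (apply Rmin_case; [|apply Rmin_case]; lra);
        try (pose proof (Rmin_l d1 (Rmin d2 t0)); pose proof (Rmin_r d1 (Rmin d2 t0));
             pose proof (Rmin_l d2 t0); pose proof (Rmin_r d2 t0); lra). }
      destruct (Hs1 h ltac:(lra)) as [Hlt _].
      assert (Hs' : Rabs (s (t0 - h) - s t0) < s t0 - x0).
      { apply Hs2. timeout 10 lra. rewrite Rabs_left; timeout 10 lra. }
      apply Rabs_def2 in Hs'.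
      assert (V x0 t0 <= V x0 (t0 - h)). { apply Hmin. split; simpl; timeout 10 lra. }
      timeout 10 lra. }
    assert (Hd2 : is_derive (fun y => - (Wx y t0 - eps * exp (- y))) x0
                     (- (Wxx x0 t0 + eps * exp (- x0)))).
    { replace (- (Wxx x0 t0 + eps * exp (- x0))) with (- Wxx x0 t0 + - (eps * exp (- x0))) by ring.
      apply is_derive_ext with (f := fun y => - Wx y t0 + eps * exp (- y)).
      { intros z; change (- Wx z t0 + eps * exp (- z) = - (Wx z t0 - eps * exp (- z))); ring. }
      apply is_derive_plusR. apply (is_derive_opp (fun y => Wx y t0)); auto.
      auto_derive; auto. ring. }
    assert (Hpos : 0 < - (Wxx x0 t0 + eps * exp (- x0))).
    { pose proof (Hexp1 x0 (proj1 Hx0)).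
      assert (eps * exp (- x0) <= eps * 1) by (apply Rmult_le_compat_l; lra). timeout 10 lra. }
    destruct (sign_pos _ _ _ Hd2 Hpos) as [d3 [Hd3 Hs3]].
    set (h := Rmin d3 (Rmin x0 (s t0 - x0)) / 2).
    assert (Hh : 0 < h /\ h < d3 /\ h < x0 /\ h < s t0 - x0).
    { unfold h. pose proof (Rmin_l d3 (Rmin x0 (s t0 - x0))); pose proof (Rmin_r d3 (Rmin x0 (s t0 - x0)));
      pose proof (Rmin_l x0 (s t0 - x0)); pose proof (Rmin_r x0 (s t0 - x0)).
      repeat split; try timeout 10 lra. apply Rmin_case; [|apply Rmin_case]; timeout 10 lra. }
    set (Vx := fun y => Wx y t0 - eps * exp (- y)).
    assert (Hder : forall c, x0 - h <= c <= x0 + h -> derivable_pt_lim (fun z => V z t0) c (Vx c)).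
    { intros c Hc. apply is_derive_Reals. apply HVx. timeout 10 lra. }
    destruct (Rle_or_lt (Vx x0) 0) as [Hv|Hv].
    + destruct (MVT_cor2 (fun z => V z t0) Vx x0 (x0 + h) ltac:(lra)) as [c [Hc1 Hc2]].
      { intros c Hc; apply Hder; timeout 10 lra. }
      destruct (Hs3 (c - x0) ltac:(lra)) as [_ Hr].
      replace (x0 + (c - x0)) with c in Hr by ring. unfold Vx in Hv.
      assert (V x0 t0 <= V (x0 + h) t0). { apply Hmin. split; simpl; timeout 10 lra. }
      unfold Vx in Hc1. timeout 10 nra.
    + destruct (MVT_cor2 (fun z => V z t0) Vx (x0 - h) x0 ltac:(lra)) as [c [Hc1 Hc2]].
      { intros c Hc; apply Hder; timeout 10 lra. }
      destruct (Hs3 (x0 - c) ltac:(lra)) as [Hl _].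
      replace (x0 - (x0 - c)) with c in Hl by ring. unfold Vx in Hv.
      assert (V x0 t0 <= V (x0 - h) t0). { apply Hmin. split; simpl; timeout 10 lra. }
      unfold Vx in Hc1. timeout 10 nra.
  -
    subst x0.
    destruct (HL t0 Ht0' (eps / 4) ltac:(lra)) as [d [Hd HLd]].
    set (x1 := Rmin d (Rmin (s t0) 1) / 2).
    assert (Hx1 : 0 < x1 /\ x1 < d /\ x1 < s t0 /\ x1 <= 1/2).
    { unfold x1. pose proof (Rmin_l d (Rmin (s t0) 1)); pose proof (Rmin_r d (Rmin (s t0) 1));
      pose proof (Rmin_l (s t0) 1); pose proof (Rmin_r (s t0) 1).
      repeat split; try timeout 10 lra. apply Rmin_case; [|apply Rmin_case]; timeout 10 lra. }
    set (f := fun y => V (clamp 0 (s t0) y) t0).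
    set (df := fun y => Wx y t0 - eps * exp (- y)).
    destruct (MVT_gen f 0 x1 df) as [c [Hc Hfc]].
    { rewrite Rmin_left, Rmax_right by timeout 10 lra. intros y Hy.
      apply is_derive_ext_loc with (f := fun z => V z t0).
      2: apply HVx; timeout 10 lra.
      exists (mkposreal (Rmin y (s t0 - y)) ltac:(apply Rmin_case; lra)).
      intros z Hz. change (Rabs (z - y) < Rmin y (s t0 - y)) in Hz.
      pose proof (Rmin_l y (s t0 - y)); pose proof (Rmin_r y (s t0 - y)).
      apply Rabs_def2 in Hz.
      unfold f. rewrite clamp_id; auto. timeout 10 lra. }
    { intros y _. apply continuity_pt_filterlim.
      apply (comp_within (Kset s tau) (uncurry V) (fun z => (clamp 0 (s t0) z, t0))); auto.
      - intros z. split; simpl. apply clamp_in; timeout 10 lra. timeout 10 lra.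
      - apply cont_pair. apply clamp_cont; timeout 10 lra. apply continuous_const. }
    rewrite Rmin_left, Rmax_right in Hc by timeout 10 lra.
    assert (Hdf : df c < 0).
    { unfold df. assert (Wx c t0 < eps / 4) by (apply HLd; lra).
      pose proof (exp_ineq1_le (- c)).
      assert (eps * (1 + - c) <= eps * exp (- c)) by (apply Rmult_le_compat_l; lra).
      timeout 10 nra. }
    unfold f in Hfc. rewrite !clamp_id in Hfc by timeout 10 lra.
    assert (V 0 t0 <= V x1 t0). { apply Hmin. split; simpl; timeout 10 lra. }
    timeout 10 nra.
Qed.

Lemma cont_on_plus2 {X : UniformSpace} (D : X -> Prop) (f g : X -> R) :
  continuous_on D f -> continuous_on D g -> continuous_on D (fun p => f p + g p).
Proof.
  intros Hf Hg x Dx.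
  apply (filterlim_comp_2 (G := locally (f x)) (H := locally (g x)) f g Rplus).
  apply Hf; auto. apply Hg; auto. apply (filterlim_plus (f x) (g x)).
Qed.

Lemma cont_on_minus2 {X : UniformSpace} (D : X -> Prop) (f g : X -> R) :
  continuous_on D f -> continuous_on D g -> continuous_on D (fun p => f p - g p).
Proof.
  intros Hf Hg. apply cont_on_plus2; auto.
  intros x Dx. eapply filterlim_comp. apply (Hg x Dx).
  apply (filterlim_opp (g x)).
Qed.

Lemma is_derive_minusR (f g : R -> R) x a b :
  is_derive f x a -> is_derive g x b -> is_derive (fun y => f y - g y) x (a - b).
Proof. intros; apply is_derive_plusR; auto. apply (is_derive_opp g); auto. Qed.

Lemma mp_closure (T : R) (s : R -> R) (W Wx Wxx Wt : R -> R -> R) :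
  0 < T -> boundary_function T s ->
  continuous_on (Qst_closure s T) (uncurry W) ->
  (forall x t, Qst s T (x, t) ->
     is_derive (fun y => W y t) x (Wx x t) /\ is_derive (fun y => Wx y t) x (Wxx x t) /\
     is_derive (fun z => W x z) t (Wt x t) /\ Wt x t = Wxx x t) ->
  (forall t, 0 < t < T -> forall e, 0 < e ->
     exists d, 0 < d /\ forall x, 0 <= x < d -> x < s t -> Wx x t < e) ->
  0 <= W 0 0 -> (forall t, 0 < t <= T -> 0 <= W (s t) t) ->
  forall x t, Qst_closure s T (x, t) -> 0 <= W x t.
Proof.
  intros HT [Hsc [_ [Hs0 Hsp]]] HWc HD HL HB0 HBr.
  assert (Hlt : forall x t, Qst_closure s T (x, t) -> t < T -> 0 <= W x t).
  { intros x t [Hx Ht] HtT; simpl in Hx, Ht.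
    destruct (Rle_lt_or_eq_dec 0 t (proj1 Ht)) as [Htp|Ht0].
    2:{ subst t. rewrite Hs0 in Hx. replace x with 0 by lra. auto. }
    apply (min_principle s t W Wx Wxx Wt); auto.
    - apply continuous_on_subset with (D := fun t => 0 <= t <= T); auto.
      intros z Hz; lra.
    - intros z Hz; apply Hsp; lra.
    - apply continuous_on_subset with (D := Qst_closure s T); auto.
      intros [a b] [H1 H2]; split; simpl in *; lra.
    - intros a b Hb Ha. apply HD. split; simpl; lra.
    - intros z Hz; apply HL; lra.
    - intros z Hz; apply HBr; lra.
    - split; simpl; lra. }
  intros x t Hc. destruct (Rlt_or_le t T) as [HtT|HtT]. apply Hlt; auto.
  destruct Hc as [Hx Ht]; simpl in Hx, Ht. assert (t = T) by lra. subst t.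
  destruct (Rle_or_lt 0 (W x T)) as [|Hneg]; auto. exfalso.
  destruct (cont_on_eps2 _ _ (x, T) HWc (conj Hx Ht) (- W x T) ltac:(lra)) as [d [Hd Hd']].
  destruct (cont_on_eps1 _ s T Hsc ltac:(lra) d Hd) as [d2 [Hd2 Hd2']].
  set (t' := T - Rmin d (Rmin d2 T) / 2).
  assert (Ht' : 0 < t' < T /\ T - t' < d /\ T - t' < d2).
  { unfold t'. pose proof (Rmin_l d (Rmin d2 T)); pose proof (Rmin_r d (Rmin d2 T));
      pose proof (Rmin_l d2 T); pose proof (Rmin_r d2 T).
    assert (0 < Rmin d (Rmin d2 T)) by (apply Rmin_case; [|apply Rmin_case]; lra).
    lra. }
  assert (Hst' : 0 < s t') by (apply Hsp; lra).
  assert (Hs2 : Rabs (s t' - s T) < d) by (apply Hd2'; [lra| rewrite Rabs_left; lra]).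
  apply Rabs_def2 in Hs2.
  set (x' := Rmin x (s t')).
  assert (Hx' : 0 <= x' <= s t' /\ Rabs (x' - x) < d).
  { unfold x'. apply Rmin_case_strong; intros; split; try lra.
    rewrite Rminus_diag, Rabs_R0; lra. rewrite Rabs_left1; lra. }
  assert (HW' : Rabs (uncurry W (x', t') - uncurry W (x, T)) < - W x T).
  { apply Hd'. split; simpl; lra. simpl; lra. simpl. rewrite Rabs_left; lra. }
  unfold uncurry in HW'; simpl in HW'. apply Rabs_def2 in HW'.
  assert (0 <= W x' t') by (apply Hlt; [split; simpl; lra | lra]). lra.
Qed.

Lemma hl_from_cont (T : R) (s : R -> R) (Wx : R -> R -> R) t :
  continuous_on (fun p => Qst_closure s T p /\ snd p <> 0) (uncurry Wx) ->
  0 < t < T -> 0 <= s t -> Wx 0 t <= 0 ->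
  forall e, 0 < e -> exists d, 0 < d /\ forall x, 0 <= x < d -> x < s t -> Wx x t < e.
Proof.
  intros Hc Ht Hs Hw e He.
  destruct (cont_on_eps2 _ _ (0, t) Hc) with (e := e) as [d [Hd Hd']]; auto.
  { split. split; simpl; lra. simpl; lra. }
  exists d. split; auto. intros x Hx Hxs.
  assert (H := Hd' (x, t)). simpl in H. unfold uncurry in H; simpl in H.
  assert (Rabs (Wx x t - Wx 0 t) < e).
  { apply H. split. split; simpl; lra. simpl; lra.
    rewrite Rminus_0_r, Rabs_pos_eq; lra. rewrite Rminus_diag, Rabs_R0; lra. }
  apply Rabs_def2 in H0. lra.
Qed.

Lemma sol_nonneg T h s U :
  0 < T -> (forall t, 0 <= t <= T -> 0 < h t) ->
  boundary_function T s -> FBNP_solution T h s U ->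
  forall x t, Qst_closure s T (x, t) -> 0 <= U x t.
Proof.
  intros HT Hh Hbf [HUc [Ux [Uxx [Ut [HD [_ [HUxc [Heq [H00 [Hr Hl]]]]]]]]]].
  apply (mp_closure T s U Ux Uxx Ut); auto.
  - intros a b Hq. destruct (HD a b Hq) as [? [? ?]]. split; [|split; [|split]]; auto.
  - intros z Hz. apply (hl_from_cont T s Ux z); auto.
    destruct Hbf as [_ [_ [_ Hsp]]]. apply Rlt_le, Hsp; lra.
    pose proof (Hl z ltac:(lra)). pose proof (Hh z ltac:(lra)). lra.
  - rewrite H00; lra.
  - intros z Hz. rewrite Hr; auto. lra.
Qed.

Lemma sol_compare T h s1 s2 U1 U2 :
  0 < T -> (forall t, 0 <= t <= T -> 0 < h t) ->
  boundary_function T s1 -> FBNP_solution T h s1 U1 ->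
  boundary_function T s2 -> FBNP_solution T h s2 U2 ->
  (forall t, 0 <= t <= T -> s1 t <= s2 t) ->
  forall x t, Qst_closure s1 T (x, t) -> U1 x t <= U2 x t.
Proof.
  intros HT Hh Hbf1 Hs1 Hbf2 Hs2 Hle.
  assert (Hnn2 := sol_nonneg T h s2 U2 HT Hh Hbf2 Hs2).
  destruct Hs1 as [HUc1 [Ux1 [Uxx1 [Ut1 [HD1 [_ [HUxc1 [Heq1 [H001 [Hr1 Hl1]]]]]]]]]].
  destruct Hs2 as [HUc2 [Ux2 [Uxx2 [Ut2 [HD2 [_ [HUxc2 [Heq2 [H002 [Hr2 Hl2]]]]]]]]]].
  intros x t Hc.
  cut (0 <= U2 x t - U1 x t). lra.
  assert (Hsub : forall p, Qst_closure s1 T p -> Qst_closure s2 T p).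
  { intros [a b] [H1 H2]; simpl in *. split; simpl; auto. pose proof (Hle b H2). lra. }
  apply (mp_closure T s1 (fun x t => U2 x t - U1 x t) (fun x t => Ux2 x t - Ux1 x t)
           (fun x t => Uxx2 x t - Uxx1 x t) (fun x t => Ut2 x t - Ut1 x t)); auto.
  - apply continuous_on_ext with (f := fun p => uncurry U2 p - uncurry U1 p).
    { intros [a b] _; reflexivity. }
    apply cont_on_minus2; auto.
    apply continuous_on_subset with (D := Qst_closure s2 T); auto.
  - intros a b Hq.
    assert (Hq2 : Qst s2 T (a, b)).
    { destruct Hq as [H1 H2]; simpl in *. split; simpl; auto. pose proof (Hle b ltac:(lra)). lra. }
    destruct (HD1 a b Hq) as [A1 [B1 C1]]. destruct (HD2 a b Hq2) as [A2 [B2 C2]].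
    split; [|split; [|split]]; try (apply is_derive_minusR; auto).
    rewrite Heq1, Heq2; auto.
  - intros b Hb. apply (hl_from_cont T s1 (fun x t => Ux2 x t - Ux1 x t) b); auto.
    + apply continuous_on_ext with (f := fun p => uncurry Ux2 p - uncurry Ux1 p).
      { intros [a c] _; reflexivity. }
      apply cont_on_minus2; auto.
      apply continuous_on_subset with (D := fun p => Qst_closure s2 T p /\ snd p <> 0); auto.
      intros p [Hp Hp']; split; auto.
    + destruct Hbf1 as [_ [_ [_ Hsp]]]. apply Rlt_le, Hsp; lra.
    + pose proof (Hl1 b ltac:(lra)). pose proof (Hl2 b ltac:(lra)). lra.
  - rewrite H001, H002; lra.
  - intros b Hb. rewrite Hr1; auto.
    assert (0 <= U2 (s1 b) b). { apply Hnn2. split; simpl; try lra.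
      destruct Hbf1 as [_ [_ [_ Hsp]]]. pose proof (Hsp b Hb). pose proof (Hle b ltac:(lra)). lra. }
    lra.
Qed.

Lemma slice_int T s U t a b :
  continuous_on (Qst_closure s T) (uncurry U) -> 0 <= t <= T ->
  0 <= a -> a <= b -> b <= s t -> ex_RInt (fun x => U x t) a b.
Proof.
  intros Hc Ht Ha Hab Hb.
  apply ex_RInt_ext with (f := fun x => U (clamp a b x) t).
  { rewrite Rmin_left, Rmax_right by lra. intros x Hx. rewrite clamp_id; lra. }
  apply (ex_RInt_continuous (V := R_CompleteNormedModule)). intros z _.
  apply (comp_within (Qst_closure s T) (uncurry U) (fun x => (clamp a b x, t))); auto.
  - intros x. pose proof (clamp_in a b x Hab). split; simpl; lra.
  - apply cont_pair. apply clamp_cont; lra. apply continuous_const.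
Qed.

Lemma int_compare T h s1 s2 U1 U2 :
  0 < T -> (forall t, 0 <= t <= T -> 0 < h t) ->
  boundary_function T s1 -> FBNP_solution T h s1 U1 ->
  boundary_function T s2 -> FBNP_solution T h s2 U2 ->
  (forall t, 0 <= t <= T -> s1 t <= s2 t) ->
  forall t, 0 <= t <= T ->
  RInt (fun x => U1 x t) 0 (s1 t) <= RInt (fun x => U2 x t) 0 (s2 t).
Proof.
  intros HT Hh Hbf1 Hs1 Hbf2 Hs2 Hle t Ht.
  pose proof (sol_compare T h s1 s2 U1 U2 HT Hh Hbf1 Hs1 Hbf2 Hs2 Hle) as Hcmp.
  pose proof (sol_nonneg T h s2 U2 HT Hh Hbf2 Hs2) as Hnn.
  assert (Hc1 := proj1 Hs1). assert (Hc2 := proj1 Hs2).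
  assert (Hs1t : 0 <= s1 t).
  { destruct Hbf1 as [_ [_ [H0 Hp]]]. destruct (Rle_lt_or_eq_dec 0 t (proj1 Ht)).
    apply Rlt_le, Hp; lra. subst; lra. }
  pose proof (Hle t Ht).
  apply Rle_trans with (RInt (fun x => U2 x t) 0 (s1 t)).
  - apply RInt_le; auto.
    + apply (slice_int T s1); auto; lra.
    + apply (slice_int T s2); auto; lra.
    + intros x Hx. apply Hcmp. split; simpl; lra.
  - rewrite <- (RInt_Chasles (fun x => U2 x t) 0 (s1 t) (s2 t)).
    2: apply (slice_int T s2); auto; lra.
    2: apply (slice_int T s2); auto; lra.
    change (plus ?a ?b) with (a + b).
    assert (0 <= RInt (fun x => U2 x t) (s1 t) (s2 t)).
    { apply RInt_ge_0; auto. apply (slice_int T s2); auto; lra.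
      intros x Hx. apply Hnn. split; simpl; lra. }
    lra.
Qed.

Theorem mainTheorem2 (T : R) (h : R -> R) (Usol : (R -> R) -> R -> R -> R)
  (sstar s : R -> R) :
  0 < T ->
  continuous_on (fun t => 0 <= t <= T) h ->
  (forall t, 0 <= t <= T -> 0 < h t) ->
  (forall s', boundary_function T s' -> FBNP_solution T h s' (Usol s')) ->
  boundary_function T sstar ->
  (forall t, 0 <= t <= T -> Rop h Usol sstar t = sstar t) ->
  boundary_function T s ->
  ((forall t, 0 <= t <= T -> s t <= sstar t) ->
   forall t, 0 <= t <= T ->
     s t - sstar t <= (s t - sstar t) / 2 /\
     (s t - sstar t) / 2 <= Phalf h Usol s t - sstar t /\
     Phalf h Usol s t - sstar t <= (Rop h Usol s t - sstar t) / 2 /\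
     (Rop h Usol s t - sstar t) / 2 <= Rop h Usol s t - sstar t) /\
  ((forall t, 0 <= t <= T -> sstar t <= s t) ->
   forall t, 0 <= t <= T ->
     s t - sstar t >= (s t - sstar t) / 2 /\
     (s t - sstar t) / 2 >= Phalf h Usol s t - sstar t /\
     Phalf h Usol s t - sstar t >= (Rop h Usol s t - sstar t) / 2 /\
     (Rop h Usol s t - sstar t) / 2 >= Rop h Usol s t - sstar t).
Proof.
  intros HT Hhc Hh Hsol Hbfs Hfix Hbf.
  split.
  - intros Hle t Ht.
    pose proof (int_compare T h s sstar (Usol s) (Usol sstar) HT Hh Hbf (Hsol s Hbf) Hbfs (Hsol sstar Hbfs) Hle t Ht) as Hi.
    pose proof (Hfix t Ht) as Hf. pose proof (Hle t Ht).
    unfold Phalf, Rop in *. lra.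
  - intros Hle t Ht.
    pose proof (int_compare T h sstar s (Usol sstar) (Usol s) HT Hh Hbfs (Hsol sstar Hbfs) Hbf (Hsol s Hbf) Hle t Ht) as Hi.
    pose proof (Hfix t Ht) as Hf. pose proof (Hle t Ht).
    unfold Phalf, Rop in *. lra.
Qed.
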